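(* Let $S$ be a regular semigroup. The following are equivalent: (1) $I^{2}=I$ for every interior ideal $I$ of $S$; (2) $I_1\cap I_2=I_1I_2\cap I_2I_1$ for all interior ideals $I_1,I_2$ of $S$; (3) every interior ideal of $S$ is semiprime; (4) every proper interior ideal of $S$ is the intersection of the irreducible semiprime interior ideals of $S$ which contain it.
   Context: A semigroup $S$ is regular if for every $a\in S$ there is $x\in S$ with $a=axa$. A subsemigroup $I$ of $S$ (non-empty with $II\subseteq I$) is an interior ideal if $SIS\subseteq I$. For subsets $A,B$, $AB=\{ab:a\in A,b\in B\}$ and $A^2=AA$. An interior ideal $I$ is semiprime if for every interior ideal $A$ of $S$, $A^{2}\subseteq I$ implies $A\subseteq I$. It is irreducible if for all interior ideals $I_1,I_2$ of $S$, $I_1\cap I_2=I$ implies $I_1=I$ or $I_2=I$. *)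

(* Defs.v *)
Set Implicit Arguments.

Section Semigroups.
Variable T : Type.
Variable op : T -> T -> T.

Definition set_eq (A B : T -> Prop) : Prop := forall x, A x <-> B x.
Definition subset (A B : T -> Prop) : Prop := forall x, A x -> B x.
Definition setI (A B : T -> Prop) : T -> Prop := fun x => A x /\ B x.

Definition setmul (A B : T -> Prop) : T -> Prop :=
  fun z => exists a b, A a /\ B b /\ z = op a b.

Definition regular : Prop := forall a, exists x, a = op (op a x) a.

Definition subsemigroup (I : T -> Prop) : Prop :=
  (exists x, I x) /\ subset (setmul I I) I.

Definition interior_ideal (I : T -> Prop) : Prop :=
  subsemigroup I /\ subset (setmul (setmul (fun _ => True) I) (fun _ => True)) I.

Definition semiprime (I : T -> Prop) : Prop :=
  forall A, interior_ideal A -> subset (setmul A A) I -> subset A I.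

Definition irreducible (I : T -> Prop) : Prop :=
  forall I1 I2, interior_ideal I1 -> interior_ideal I2 ->
    set_eq (setI I1 I2) I -> set_eq I1 I \/ set_eq I2 I.

Definition proper (I : T -> Prop) : Prop := exists x, ~ I x.

Definition irr_sp_hull (I : T -> Prop) : T -> Prop :=
  fun x => forall J, interior_ideal J -> irreducible J -> semiprime J ->
             subset I J -> J x.

End Semigroups.

(* Main.v *)
Require Import Defs.
From Stdlib Require Import Classical.

Section S.
Variable T : Type.
Variable op : T -> T -> T.
Hypothesis assoc : forall x y z, op x (op y z) = op (op x y) z.
Hypothesis reg : regular op.

Lemma ideal_l I s a : interior_ideal op I -> I a -> I (op s a).
Proof.
  intros [_ H] Ha. destruct (reg a) as [x Hx].
  assert (E : op s a = op (op s a) (op x a)).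
  { rewrite Hx at 1. rewrite <- (assoc a x a). rewrite (assoc s a). reflexivity. }
  rewrite E. apply H. exists (op s a), (op x a). split; [|split; auto].
  exists s, a. auto.
Qed.

Lemma ideal_r I s a : interior_ideal op I -> I a -> I (op a s).
Proof.
  intros [_ H] Ha. destruct (reg a) as [x Hx].
  rewrite Hx. apply H. exists (op (op a x) a), s. split; [|split; auto].
  exists (op a x), a. auto.
Qed.

Lemma p1 I : interior_ideal op I -> set_eq (setmul op I I) I.
Proof.
  intros HI z; split.
  - intros Hz. destruct HI as [[_ H] _]. apply H, Hz.
  - intros Hz. destruct (reg z) as [x Hx]. exists z, (op x z).
    split; [auto|split; [apply ideal_l; auto|]].
    rewrite Hx at 1. rewrite <- assoc. reflexivity.
Qed.

Lemma p2 I1 I2 : interior_ideal op I1 -> interior_ideal op I2 ->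
  set_eq (setI I1 I2) (setI (setmul op I1 I2) (setmul op I2 I1)).
Proof.
  intros H1 H2 z; split.
  - intros [Hz1 Hz2]. destruct (reg z) as [x Hx]. split.
    + exists z, (op x z). split; [auto|split; [apply ideal_l; auto|]].
      rewrite Hx at 1. rewrite <- assoc. reflexivity.
    + exists z, (op x z). split; [auto|split; [apply ideal_l; auto|]].
      rewrite Hx at 1. rewrite <- assoc. reflexivity.
  - intros [[a [b [Ha [Hb E]]]] _]. subst z. split.
    + apply ideal_r; auto.
    + apply ideal_l; auto.
Qed.

Lemma p3 I : interior_ideal op I -> semiprime op I.
Proof.
  intros HI A HA Hsub x Hx. apply Hsub. apply (@p1 A HA). exact Hx.
Qed.

Definition M (I : T -> Prop) (a : T) : T -> Prop :=
  fun x => exists J, interior_ideal op J /\ subset I J /\ ~ J a /\ J x.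

Lemma M_ii I a : interior_ideal op I -> ~ I a -> interior_ideal op (M I a).
Proof.
  intros HI Ha. split; [split|].
  - pose proof HI as HI'. destruct HI' as [[[y Hy] _] _]. exists y. exists I.
    split; [exact HI| split; [intros z h; exact h | split; auto]].
  - intros z [u [v [[J [HJ [HIJ [HJa Hu]]]] [_ E]]]]. subst z.
    exists J. split; [exact HJ|split; [exact HIJ|split; [exact HJa|]]]. apply ideal_r; auto.
  - intros z [u [v [[s [w [_ [[J [HJ [HIJ [HJa Hw]]]] E1]]]] [_ E]]]]. subst z u.
    exists J. split; [exact HJ|split; [exact HIJ|split; [exact HJa|]]]. apply ideal_r; auto. apply ideal_l; auto.
Qed.

Lemma M_irr I a : interior_ideal op I -> ~ I a -> irreducible op (M I a).
Proof.
  intros HI Ha I1 I2 H1 H2 E.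
  assert (HMa : ~ M I a a) by (intros [J [_ [_ [HJa HJ]]]]; auto).
  destruct (classic (I1 a)) as [A1|A1].
  - destruct (classic (I2 a)) as [A2|A2].
    + exfalso. apply HMa. apply E. split; auto.
    + right. intros z; split.
      * intros Hz. exists I2. split; [exact H2|split; [|split; [exact A2|]]]; auto.
        intros y Hy. apply (proj2 (proj2 (E y) (ex_intro _ I (conj HI (conj (fun _ h => h) (conj Ha Hy)))))) .
      * intros Hz. apply (proj2 (E z)) in Hz. destruct Hz; auto.
  - left. intros z; split.
    + intros Hz. exists I1. split; [exact H1|split; [|split; [exact A1|]]]; auto.
      intros y Hy. exact (proj1 (proj2 (E y) (ex_intro _ I (conj HI (conj (fun _ h => h) (conj Ha Hy)))))).
    + intros Hz. apply (proj2 (E z)) in Hz. destruct Hz; auto.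
Qed.

End S.

Theorem mainTheorem12 (T : Type) (op : T -> T -> T)
  (assoc : forall x y z, op x (op y z) = op (op x y) z)
  (reg : regular op) :
  let P1 := forall I, interior_ideal op I -> set_eq (setmul op I I) I in
  let P2 := forall I1 I2, interior_ideal op I1 -> interior_ideal op I2 ->
              set_eq (setI I1 I2) (setI (setmul op I1 I2) (setmul op I2 I1)) in
  let P3 := forall I, interior_ideal op I -> semiprime op I in
  let P4 := forall I, interior_ideal op I -> proper I ->
              set_eq I (irr_sp_hull op I) in
  (P1 <-> P2) /\ (P2 <-> P3) /\ (P3 <-> P4).
Proof.
  intros P1 P2 P3 P4.
  assert (h1 : P1) by (intros I HI; apply (p1 T op assoc reg); auto).
  assert (h2 : P2) by (intros I1 I2 H1 H2; apply (p2 T op assoc reg); auto).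
  assert (h3 : P3) by (intros I HI; apply (p3 T op assoc reg); auto).
  assert (h4 : P4).
  { intros I HI _ x; split.
    - intros Hx J _ _ _ HIJ. apply HIJ, Hx.
    - intros Hx. apply NNPP. intros Ha.
      assert (HM := M_ii T op assoc reg I x HI Ha).
      destruct (Hx (M T op I x) HM (M_irr T op I x HI Ha) (p3 T op assoc reg _ HM)) as [J [_ [_ [HJa HJ]]]].
      + intros y Hy. exists I. split; [exact HI|split; [intros z h; exact h|split; auto]].
      + auto. }
  tauto.
Qed.
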